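(* Let $\Sigma$ be an alphabet of $n$ characters with $n\ge 9$, and let $\sigma$ be a random string of length $q'\le\sqrt n$ whose characters are chosen independently and uniformly at random from $\Sigma$. Then for any $\gamma\ge 4$, the probability that $\sigma$ contains $\gamma+1$ or more reappearing characters is at most $e^{-\gamma}$.
   Context: A character occurrence in a string is reappearing if the same character already occurs somewhere to its left; e.g. in $1211$ the second and third $1$'s are reappearing. *)

(* Defs.v *)
From HB Require Import structures.
From mathcomp Require Import all_boot all_order all_algebra.
From mathcomp Require Import reals sequences exp.
Set Implicit Arguments. Unset Strict Implicit. Unset Printing Implicit Defensive.
Import Order.TTheory GRing.Theory Num.Theory.

Fixpoint reap_from (T : eqType) (prev s : seq T) : nat :=
  match s with
  | [::] => 0
  | x :: s' => (x \in prev) + reap_from (rcons prev x) s'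
  end.

Definition num_reappearing (T : eqType) (s : seq T) : nat := reap_from [::] s.

Definition prob_many_reappear (R : realType) (Sigma : finType) (q : nat) (gamma : R) : R :=
  (#|[set s : q.-tuple Sigma | gamma + 1 <= (num_reappearing s)%:R]|%:R
    / (#|Sigma| ^ q)%:R)%R.

(* Main.v *)
Require Import Defs.
From HB Require Import structures.
From mathcomp Require Import all_boot all_order all_algebra.
From mathcomp Require Import reals sequences exp.
From mathcomp Require Import ring lra zify.
Import Order.TTheory GRing.Theory Num.Theory.

Lemma card_cons (T : finType) q (P : pred (seq T)) :
  #|[set t : q.+1.-tuple T | P t]| = \sum_(x : T) #|[set t : q.-tuple T | P (x :: t)]|.
Proof.
rewrite -(sum1dep_card (fun t : q.+1.-tuple T => P t)).
rewrite (eq_bigr (fun x => \sum_(t : q.-tuple T | P (x :: t)) 1)); last first.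
  by move=> x _; rewrite -(sum1dep_card (fun t : q.-tuple T => P (x :: t))).
rewrite pair_big_dep /=.
rewrite (reindex (fun p : T * q.-tuple T => [tuple of p.1 :: p.2])) /=.
  by apply: eq_bigl => -[x t].
exists (fun t : q.+1.-tuple T => (thead t, [tuple of behead t])).
  by move=> [x t] _; congr (_, _); apply: val_inj.
by move=> t _; rewrite [in RHS](tuple_eta t).
Qed.
Lemma count_bound (T : finType) (Q : nat) q : forall (prev : seq T) k, size prev + q <= Q ->
  #|[set t : q.-tuple T | k <= reap_from prev t]| * #|T| ^ k <= 'C(q, k) * Q ^ k * #|T| ^ q.
Proof.
elim: q => [|q IH] prev [|k] hQ.
- rewrite !expn0 bin0 !muln1; apply: leq_trans (max_card _) _.
  by rewrite card_tuple.
- have -> : #|[set t : 0.-tuple T | k.+1 <= reap_from prev t]| = 0 => //.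
  apply/eqP; rewrite cards_eq0; apply/eqP/setP => t; rewrite !inE.
  by rewrite (tuple0 t).
- rewrite !expn0 bin0 !muln1 mul1n; apply: leq_trans (max_card _) _.
  by rewrite card_tuple.
rewrite (@card_cons T q (fun s => k.+1 <= reap_from prev s)) /= big_distrl /=.
rewrite (bigID (fun x => x \in prev)) /=.
have hQ' x : size (rcons prev x) + q <= Q by rewrite size_rcons addSnnS.
apply: (@leq_trans ((Q * ('C(q, k) * Q ^ k * #|T| ^ q * #|T|)) +
                    #|T| * ('C(q, k.+1) * Q ^ k.+1 * #|T| ^ q))); last first.
  by apply: eq_leq; rewrite binS !expnS; ring.
apply: leq_add.
  apply: (@leq_trans (\sum_(x in prev) ('C(q, k) * Q ^ k * #|T| ^ q * #|T|))).
    apply: leq_sum => x hx.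
    have -> : #|[set t : q.-tuple T | k.+1 <= (x \in prev) + reap_from (rcons prev x) t]|
            = #|[set t : q.-tuple T | k <= reap_from (rcons prev x) t]|.
      by apply: eq_card => t; rewrite !inE hx.
    by rewrite expnS mulnCA [X in _ <= X]mulnC leq_mul2l (IH _ _ (hQ' x)) orbT.
  rewrite sum_nat_const leq_mul2r; apply/orP; right.
  apply: leq_trans (card_size prev) _; apply: leq_trans hQ; exact: leq_addr.
apply: (@leq_trans (\sum_(x in [pred x | x \notin prev]) ('C(q, k.+1) * Q ^ k.+1 * #|T| ^ q))).
  apply: leq_sum => x hx.
  rewrite (negbTE hx) /=; exact: IH.
by rewrite sum_nat_const leq_mul2r max_card orbT.
Qed.

Lemma ffact_le_exp (a m : nat) : a ^_ m <= a ^ m.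
Proof.
elim: m => [|m IH]; first by [].
by rewrite ffactnSr expnSr leq_mul // leq_subr.
Qed.

Local Open Scope ring_scope.
Lemma expR_fact (R : realType) j : (((j + 5)%N`!)%:R : R)^-1 <= expR (- (j + 4)%N%:R).
Proof.
set y := expR (- (4%:R : R)^-1).
have hy : 3 / 4 <= y.
  have := expR_ge1Dx (- (4%:R : R)^-1); rewrite -/y.
  have -> : (4%:R : R)^-1 = 1 / 4 by rewrite div1r.
  lra.
have hy4 : expR (- 1) = y ^+ 4.
  rewrite /y -expRM_natl; congr expR.
  by rewrite mulrN mulfV // pnatr_eq0.
have hz : 81 / 256 <= y ^+ 4.
  have h2 : 9 / 16 <= y * y by nra.
  rewrite (_ : y ^+ 4 = (y * y) * (y * y)); last by ring.
  nra.
have e1 : 6^-1 <= expR (- 1 : R).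
  rewrite hy4; apply: le_trans hz.
  rewrite -[6^-1]div1r; lra.
elim: j => [|j IH].
  have -> : (- (0 + 4)%N%:R : R) = 4%:R * (- 1) by rewrite add0n mulrN1.
  rewrite expRM_natl hy4 -exprM.
  set z := y ^+ 4 in hz.
  have -> : y ^+ (4 * 4) = (z * z) * (z * z) by rewrite /z -!exprD.
  have -> : ((0 + 5)%N`!)%:R = 120 :> R by [].
  have h2 : 1 / 10 <= z * z by nra.
  have h4 : 1 / 100 <= (z * z) * (z * z) by nra.
  rewrite -[120^-1]div1r; lra.
rewrite [(j.+1 + 5)%N]addSn factS natrM invfM.
have -> : (- (j.+1 + 4)%N%:R : R) = - (j + 4)%N%:R + (- 1) by rewrite addSn -addn1 natrD; ring.
rewrite expRD mulrC; apply: ler_pM => //.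
- by rewrite invr_ge0 ler0n.
- by rewrite invr_ge0 ler0n.
- apply: le_trans e1; rewrite lef_pV2 ?posrE ?ltr0n // ler_nat.
  lia.
Qed.

Theorem lemma2 (R : realType) (Sigma : finType) (q' : nat) (gamma : R) :
  (9 <= #|Sigma|)%N ->
  (q'%:R <= Num.sqrt (#|Sigma|%:R : R)) ->
  4 <= gamma ->
  prob_many_reappear Sigma q' gamma <= expR (- gamma).
Proof.
move=> hn hq hg.
rewrite /prob_many_reappear.
have n0 : (0 < #|Sigma|)%N by apply: leq_trans hn.
have hqq : (q' * q' <= #|Sigma|)%N.
  rewrite -(ler_nat R) natrM.
  apply: le_trans (ler_pM (ler0n _ _) (ler0n _ _) hq hq) _.
  by rewrite -expr2 sqr_sqrtr // ler0n.
have exk : exists k : nat, gamma + 1 <= k%:R.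
  have g0 : 0 <= gamma + 1 by lra.
  by exists (Num.Def.archi_bound (gamma + 1)); apply/ltW/archi_boundP.
case: (ex_minnP exk) => k hk kmin.
have k5 : (5 <= k)%N by rewrite -(ler_nat R); apply: le_trans hk; lra.
have hS : (#|[set s : q'.-tuple Sigma | (gamma + 1 <= (num_reappearing s)%:R)%R]|
          <= #|[set t : q'.-tuple Sigma | (k <= reap_from [::] t)%N]|)%N.
  by apply/subset_leq_card/subsetP => t; rewrite !inE => /kmin.
have hN := @count_bound Sigma q' q' [::] k (leqnn _).
set N := #|[set t : q'.-tuple Sigma | (k <= reap_from [::] t)%N]| in hS hN.
have hC : ('C(q', k) * k`! <= q' ^ k)%N by rewrite bin_ffact ffact_le_exp.
have key : (N * k`! <= #|Sigma| ^ q')%N.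
  rewrite -(@leq_pmul2l (#|Sigma| ^ k)) ?expn_gt0 ?n0 //.
  rewrite mulnA [(#|Sigma| ^ k * N)%N]mulnC.
  apply: leq_trans (leq_mul hN (leqnn k`!)) _.
  apply: (@leq_trans ('C(q', k) * k`! * q' ^ k * #|Sigma| ^ q')).
    by apply: eq_leq; ring.
  apply: (@leq_trans (q' ^ k * q' ^ k * #|Sigma| ^ q')).
    by rewrite leq_mul2r leq_mul2r hC !orbT.
  rewrite -expnMn leq_mul2r leq_exp2r ?hqq ?orbT //.
  by apply: leq_trans k5.
have [j kj] : exists j, k = (j + 5)%N by exists (k - 5)%N; lia.
apply: (@le_trans _ _ ((k`!)%:R^-1)).
  rewrite ler_pdivrMr ?ltr0n ?expn_gt0 ?n0 // mulrC ler_pdivlMr ?ltr0n ?fact_gt0 //.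
  rewrite -natrM ler_nat; apply: leq_trans key.
  by rewrite leq_mul2r hS orbT.
rewrite kj; apply: le_trans (expR_fact R j) _.
rewrite ler_expR lerN2.
rewrite kj natrD in hk; rewrite natrD; lra.
Qed.
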